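(* (1) If $t\ge2$ and $\mu_B(t)\le u\le1$, then $\mathfrak{e}^B_{t,u}\in\mathcal{E}(\mathcal{P}^{s+}_{3,5})$. (2) If $t\ge2$, $\mu_B(t)\le u<1$ and $f\in\mathcal{P}^{s+}_{3,5}$ satisfies $f(t,1,1)=f(0,u,1)=f_b(0,u,1)=0$, then $f=\lambda\mathfrak{e}^B_{t,u}$ for some $\lambda\ge0$. (3) If $t\ge2$ and $f\in\mathcal{P}^{s+}_{3,5}$ satisfies $f(t,1,1)=f(0,1,1)=f_{bb}(0,1,1)=0$, then $f=\lambda\mathfrak{e}^B_{t,1}$ for some $\lambda\ge0$. (4) $\mathfrak{e}^B_{2,1}=\mathfrak{e}^C_2$.
   Context: Let $a,b,c$ be variables. For nonnegative integers $m,n$ put $S_{m,n}=a^mb^n+b^mc^n+c^ma^n$, $S_n=S_{n,0}=a^n+b^n+c^n$, $T_{m,n}=S_{m,n}+S_{n,m}$, $U=abc$ (so $S_{1,1}=ab+bc+ca$). Let $\mathcal{H}^s_{3,5}$ be the real vector space of symmetric homogeneous polynomials of degree 5 in $\mathbb{R}[a,b,c]$; it has basis $s_0=S_5-US_{1,1}$, $s_1=T_{4,1}-2US_{1,1}$, $s_2=T_{3,2}-2US_{1,1}$, $s_3=US_2-US_{1,1}$, $s_4=US_{1,1}$. Let $\mathcal{P}^{s+}_{3,5}=\{f\in\mathcal{H}^s_{3,5}: f(a,b,c)\ge 0\text{ for all }a,b,c\ge0\}$. For a closed convex cone $\mathcal{P}$, an element $f\in\mathcal{P}\setminus\{0\}$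 is extremal if whenever $f=g+h$ with $g,h\in\mathcal{P}$ we have $g,h\in\mathbb{R}_{\ge0}f$; $\mathcal{E}(\mathcal{P})$ is the set of extremal elements. $f_b=\partial f/\partial b$, $f_{bb}=\partial^2f/\partial b^2$. Auxiliary functions: $\mu_R(t)=2-t^2+t\sqrt{(t-1)(t+2)}$, $\mu_B(t)=\tfrac12\big(\mu_R(t)-\sqrt{\mu_R(t)^2-4}\big)$ (for $t\ge2$), $\omega(u)=u+\frac1u-2$. Family B: with $p^B_1(t,w)=-2w-3$, $p^B_2(t,w)=w^2+2w+2$, $p^B_3(t,w)=-\frac{2t^3+4t^2+5t+1}{t^2(t+2)}w^2+\frac{2(4t^2+5t+3)}{t+2}w-\frac{3t^3-7t^2-12t-8}{t+2}$, $p^B_4(t,w)=\frac{(t-1)^3(-w^2-2t^2w+t^2(t-2))}{t^2(t+2)}$, put $\mathfrak{e}^B_{t,u}=s_0+\sum_{i=1}^4p^B_i(t,\omega(u))s_i$. Family C: $\mathfrak{e}^C_t=s_0-(t+1)s_1+ts_2+(t+1)^2s_3$. *)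

(* Defs.v *)
From Stdlib Require Import Reals.
From Coquelicot Require Import Coquelicot.
Open Scope R_scope.

(* Polynomials in R[a,b,c] are identified with the polynomial functions R^3 -> R
   (faithful, since R is infinite). *)
Definition fun3 := R -> R -> R -> R.

Definition S (m n : nat) : fun3 := fun a b c => a^m*b^n + b^m*c^n + c^m*a^n.
Definition Sn (n : nat) : fun3 := S n 0.
Definition T (m n : nat) : fun3 := fun a b c => S m n a b c + S n m a b c.
Definition U : fun3 := fun a b c => a*b*c.

Definition s0 : fun3 := fun a b c => Sn 5 a b c - U a b c * S 1 1 a b c.
Definition s1 : fun3 := fun a b c => T 4 1 a b c - 2 * U a b c * S 1 1 a b c.
Definition s2 : fun3 := fun a b c => T 3 2 a b c - 2 * U a b c * S 1 1 a b c.
Definition s3 : fun3 := fun a b c => U a b c * Sn 2 a b c - U a b c * S 1 1 a b c.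
Definition s4 : fun3 := fun a b c => U a b c * S 1 1 a b c.

Definition in_H (f : fun3) : Prop :=
  exists x0 x1 x2 x3 x4 : R, forall a b c,
    f a b c = x0 * s0 a b c + x1 * s1 a b c + x2 * s2 a b c
              + x3 * s3 a b c + x4 * s4 a b c.

Definition in_P (f : fun3) : Prop :=
  in_H f /\ forall a b c, 0 <= a -> 0 <= b -> 0 <= c -> 0 <= f a b c.

Definition extremal (P : fun3 -> Prop) (f : fun3) : Prop :=
  P f /\ (exists a b c, f a b c <> 0) /\
  forall g h : fun3, P g -> P h ->
    (forall a b c, f a b c = g a b c + h a b c) ->
    (exists l, 0 <= l /\ forall a b c, g a b c = l * f a b c) /\
    (exists l, 0 <= l /\ forall a b c, h a b c = l * f a b c).

Definition mu_R (t : R) : R := 2 - t^2 + t * sqrt ((t - 1) * (t + 2)).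
Definition mu_B (t : R) : R := (mu_R t - sqrt (mu_R t ^ 2 - 4)) / 2.
Definition omega (u : R) : R := u + 1 / u - 2.

Definition pB1 (t w : R) : R := - 2 * w - 3.
Definition pB2 (t w : R) : R := w^2 + 2 * w + 2.
Definition pB3 (t w : R) : R :=
  - ((2 * t^3 + 4 * t^2 + 5 * t + 1) / (t^2 * (t + 2))) * w^2
  + (2 * (4 * t^2 + 5 * t + 3) / (t + 2)) * w
  - (3 * t^3 - 7 * t^2 - 12 * t - 8) / (t + 2).
Definition pB4 (t w : R) : R :=
  ((t - 1)^3 * (- w^2 - 2 * t^2 * w + t^2 * (t - 2))) / (t^2 * (t + 2)).

Definition eB (t u : R) : fun3 := fun a b c =>
  let w := omega u in
  s0 a b c + pB1 t w * s1 a b c + pB2 t w * s2 a b c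
           + pB3 t w * s3 a b c + pB4 t w * s4 a b c.

Definition eC (t : R) : fun3 := fun a b c =>
  s0 a b c - (t + 1) * s1 a b c + t * s2 a b c + (t + 1)^2 * s3 a b c.

Definition f_b (f : fun3) (a b c : R) : R := Derive (fun y => f a y c) b.
Definition f_bb (f : fun3) (a b c : R) : R := Derive_n (fun y => f a y c) 2 b.

(* Main.v *)
Require Import Defs.
From Stdlib Require Import Reals.
From Coquelicot Require Import Coquelicot.
From Stdlib Require Import Lra Psatz.
Open Scope R_scope.


Lemma abs_prod_pos (a b : R) : Rabs (a - b) < Rabs b -> a * b > 0.
Proof.
  intros H. unfold Rabs in H. destruct (Rcase_abs (a - b)); destruct (Rcase_abs b); nra.
Qed.

Lemma cont_sign (k : R -> R) (t d : R) : continuity_pt k t -> k t <> 0 -> 0 < d ->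
  exists e, 0 < e < d /\ k (t + e) * k t > 0 /\ k (t - e) * k t > 0.
Proof.
  intros Hc Hk Hd.
  assert (He : Rabs (k t) > 0) by (apply Rabs_pos_lt; auto).
  destruct (Hc (Rabs (k t)) He) as [alp [Halp H]].
  set (e := Rmin alp d / 2).
  assert (Hm1 : Rmin alp d <= alp) by apply Rmin_l.
  assert (Hm2 : Rmin alp d <= d) by apply Rmin_r.
  assert (Hm0 : 0 < Rmin alp d) by (apply Rmin_pos; lra).
  exists e. split; [unfold e; lra|]. split.
  - apply abs_prod_pos. apply (H (t + e)). split.
    + unfold D_x, no_cond. split; auto. unfold e; lra.
    + simpl. unfold R_dist. replace (t + e - t) with e by ring. rewrite Rabs_right; unfold e; lra.
  - apply abs_prod_pos. apply (H (t - e)). split.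
    + unfold D_x, no_cond. split; auto. unfold e; lra.
    + simpl. unfold R_dist. replace (t - e - t) with (- e) by ring. rewrite Rabs_Ropp, Rabs_right; unfold e; lra.
Qed.

Lemma sign_zero (k : R -> R) (t d : R) : continuity_pt k t -> 0 < d ->
  (forall x, t - d < x < t + d -> 0 <= (x - t) * k x) -> k t = 0.
Proof.
  intros Hc Hd H. destruct (Req_dec (k t) 0) as [|Hn]; auto.
  destruct (cont_sign k t d Hc Hn Hd) as [e [He [H1 H2]]].
  assert (A1 := H (t + e) ltac:(lra)). assert (A2 := H (t - e) ltac:(lra)).
  replace (t + e - t) with e in A1 by ring. replace (t - e - t) with (-e) in A2 by ring.
  exfalso. nra.
Qed.

Lemma right_nonneg (k : R -> R) (t d : R) : continuity_pt k t -> 0 < d ->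
  (forall x, t < x < t + d -> 0 <= k x) -> 0 <= k t.
Proof.
  intros Hc Hd H. destruct (Rle_lt_dec 0 (k t)) as [|Hn]; auto.
  destruct (cont_sign k t d Hc ltac:(lra) Hd) as [e [He [H1 H2]]].
  assert (A1 := H (t + e) ltac:(lra)). nra.
Qed.

Definition Qf (t w : R) : R := t^3 - 2*t^2 - 2*t^2*w - w^2.


Lemma param (t u : R) : 2 <= t -> mu_B t <= u <= 1 ->
  0 < u /\ 0 <= omega u /\ 0 <= Qf t (omega u) /\ omega u <= (t-2)/2.
Proof.
  intros Ht [Hu1 Hu2]. unfold mu_B, mu_R in Hu1.
  assert (Hp : 0 <= (t-1)*(t+2)) by nra.
  pose proof (sqrt_sqrt _ Hp) as Hsq. pose proof (sqrt_pos ((t-1)*(t+2))) as Hsq0.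
  set (sq := sqrt ((t-1)*(t+2))) in *.
  assert (Hsqt : t <= sq) by nra.
  set (m := 2 - t^2 + t*sq) in *.
  assert (Hm : 2 <= m) by (unfold m; nra).
  assert (Hp2 : 0 <= m^2 - 4) by nra.
  pose proof (sqrt_sqrt _ Hp2) as Hd. pose proof (sqrt_pos (m^2-4)) as Hd0.
  set (d := sqrt (m^2 - 4)) in *.
  assert (Hdm : d < m) by nra.
  set (v := (m - d)/2) in *.
  assert (Hv : 0 < v) by (unfold v; lra).
  assert (HvV : v * ((m + d)/2) = 1) by (unfold v; nra).
  assert (Hu : 0 < u) by lra.
  assert (Hiu : u * (1/u) = 1) by (field; lra).
  assert (Hiu0 : 0 < 1/u) by (apply Rdiv_lt_0_compat; lra).
  assert (Hw0 : 0 <= omega u) by (unfold omega; nra).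
  assert (Hws : omega u <= m - 2).
  { unfold omega. assert (1/u <= (m+d)/2) by nra. nra. }
  assert (HQs : Qf t (m - 2) = 0) by (unfold Qf, m; nra).
  assert (HQ : 0 <= Qf t (omega u)).
  { assert (Qf t (omega u) = Qf t (omega u) - Qf t (m-2)) by lra.
    unfold Qf in *. nra. }
  repeat split; auto. unfold Qf in HQ. nra.
Qed.


Definition qh (t w x y : R) : R :=
  t^4*x^2*y + 2*t^4*x*y^2 - 2*t^3*w*x^2*y - 4*t^3*w*x*y^2 - 8*t^3*x^2*y - 2*t^3*x*y^2
  + t^3*y^3 + 14*t^2*w*x^2*y - 8*t^2*w*x*y^2 + 16*t^2*x^2*y - 12*t^2*x*y^2 + 2*t^2*y^3
  + 2*t*w^2*x^3 - 5*t*w^2*x^2*y + 4*w^2*x^3 - w^2*x^2*y.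

Lemma Cp_nonneg t x y : 2 <= t -> 0 <= x -> 0 <= y ->
  0 <= (t+2)*y*y + 2*(t-3)*(t+2)*y*x + (t-4)^2*x*x.
Proof.
  intros Ht Hx Hy. destruct (Rle_lt_dec 3 t).
  - assert (0 <= (t-3)*(t+2)*y*x).
    { apply Rmult_le_pos; [|lra]. apply Rmult_le_pos; [|lra]. nra. }
    assert (0 <= (t+2)*y*y) by (apply Rmult_le_pos; [apply Rmult_le_pos|]; lra).
    assert (0 <= (t-4)^2*x*x) by (apply Rmult_le_pos; [apply Rmult_le_pos; [apply pow2_ge_0|]|]; lra).
    lra.
  - assert (E : (t+2)*y*y + 2*(t-3)*(t+2)*y*x + (t-4)^2*x*x
              = (t+2)*(y + (t-3)*x)^2 + (t-2)*(-t^2+3*t+1)*(x*x)) by ring.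
    rewrite E. assert (0 <= (t-2)*(-t^2+3*t+1)) by (apply Rmult_le_pos; nra).
    assert (0 <= (t+2)*(y + (t-3)*x)^2) by (apply Rmult_le_pos; [lra| apply pow2_ge_0]).
    assert (0 <= (t-2)*(-t^2+3*t+1)*(x*x)) by (apply Rmult_le_pos; nra).
    lra.
Qed.

Lemma qh_nonneg t w x y : 2 <= t -> 0 <= w -> 0 <= Qf t w -> w <= (t-2)/2 ->
  0 <= x -> 0 <= y -> 0 <= qh t w x y.
Proof.
  intros Ht Hw HQ HW Hx Hy.
  destruct (Rle_lt_dec ((2*t+4)*x) ((5*t+1)*y)) as [Hc|Hc].
  - assert (E : qh t w x y = (y-x)^2*(t*t*(t+2)*y + 2*t*t*(t*t - 2*t*w - 4*w - 4)*x)
                 + Qf t w * (((5*t+1)*y - (2*t+4)*x) * (x*x)))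
      by (unfold qh, Qf; ring).
    rewrite E.
    assert (Hb : 0 <= t*t - 2*t*w - 4*w - 4) by nra.
    assert (0 <= t*t*(t+2)*y) by (apply Rmult_le_pos; [nra|lra]).
    assert (0 <= 2*t*t*(t*t - 2*t*w - 4*w - 4)*x) by (apply Rmult_le_pos; [nra|lra]).
    assert (0 <= (y-x)^2*(t*t*(t+2)*y + 2*t*t*(t*t - 2*t*w - 4*w - 4)*x))
      by (apply Rmult_le_pos; [apply pow2_ge_0|lra]).
    assert (0 <= ((5*t+1)*y - (2*t+4)*x) * (x*x)) by (apply Rmult_le_pos; nra).
    assert (0 <= Qf t w * (((5*t+1)*y - (2*t+4)*x) * (x*x))) by (apply Rmult_le_pos; lra).
    lra.
  - set (Cp := (t+2)*y*y + 2*(t-3)*(t+2)*y*x + (t-4)^2*x*x).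
    set (A := ((2*t+4)*x - (5*t+1)*y)*(x*x)).
    set (B := -2*t*t*y*x*(2*t*y+4*y+(t-7)*x)).
    set (C := t*t*y*Cp).
    assert (E : qh t w x y = A*(w*w) + (B*w + C)) by (unfold qh, A, B, C, Cp; ring).
    rewrite E.
    assert (HA : 0 <= A*(w*w)) by (unfold A; apply Rmult_le_pos; [apply Rmult_le_pos; nra|nra]).
    assert (HCp : 0 <= Cp) by (apply Cp_nonneg; auto).
    assert (HC : 0 <= C) by (unfold C; apply Rmult_le_pos; [apply Rmult_le_pos; nra|auto]).
    assert (HCB : C + B*((t-2)/2) = t*t*y*(t+2)*(y-x)^2) by (unfold C, B, Cp; field).
    assert (HCB0 : 0 <= t*t*y*(t+2)*(y-x)^2)
      by (apply Rmult_le_pos; [apply Rmult_le_pos; [apply Rmult_le_pos; nra|lra]|apply pow2_ge_0]).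
    assert (0 <= B*w + C).
    { destruct (Req_dec t 2) as [Ht2|Ht2].
      - assert (w = 0) by lra. subst w. lra.
      - assert (HWp : 0 < (t-2)/2) by lra.
        assert (Hk : (t-2)/2 * (B*w + C) = ((t-2)/2 - w)*C + w*(C + B*((t-2)/2))) by ring.
        assert (0 <= ((t-2)/2 - w)*C) by (apply Rmult_le_pos; lra).
        assert (0 <= w*(C + B*((t-2)/2))) by (apply Rmult_le_pos; lra).
        nra. }
    lra.
Qed.

Lemma eB_yxx t u x y : 0 < u -> 2 <= t ->
  eB t u y x x = (y - t*x)^2 * qh t (omega u) x y / (t^2*(t+2)).
Proof.
  intros Hu Ht. unfold eB. cbv zeta. set (w := omega u).
  unfold s0, s1, s2, s3, s4, Sn, T, U, S, pB1, pB2, pB3, pB4, qh.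
  field. split; nra.
Qed.

Lemma eB_xy0 t u x y : eB t u x y 0 = (x + y) * (x^2 - (omega u + 2)*x*y + y^2)^2.
Proof.
  unfold eB. cbv zeta. set (w := omega u).
  unfold s0, s1, s2, s3, s4, Sn, T, U, S, pB1, pB2. ring.
Qed.

Lemma pqr_reduce (F : fun3) (al be : R -> R -> R) :
  (forall a b c, F a b c = be (a+b+c) (a*b+b*c+c*a) + al (a+b+c) (a*b+b*c+c*a) * (a*b*c)) ->
  (forall X Y, 0 <= X -> 0 <= Y -> 0 <= F X X Y) ->
  (forall X Y, 0 <= X -> 0 <= Y -> 0 <= F X Y 0) ->
  forall a b c, 0<=a -> 0<=b -> 0<=c -> 0 <= F a b c.
Proof.
  intros HF H1 H2 a b c Ha Hb Hc.
  rewrite HF.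
  assert (Hp0 : 0 <= a+b+c) by lra.
  assert (Hq0 : 0 <= a*b+b*c+c*a) by nra.
  assert (Hr0 : 0 <= a*b*c) by (apply Rmult_le_pos; [apply Rmult_le_pos|]; lra).
  assert (Hd3 : 0 <= (a+b+c)^2 - 3*(a*b+b*c+c*a)) by (pose proof (pow2_ge_0 (a-b)); pose proof (pow2_ge_0 (b-c)); pose proof (pow2_ge_0 (c-a)); nra).
  assert (HD : 0 <= (a+b+c)^2*(a*b+b*c+c*a)^2 - 4*(a*b+b*c+c*a)^3 - 4*(a+b+c)^3*(a*b*c)
                 + 18*(a+b+c)*(a*b+b*c+c*a)*(a*b*c) - 27*(a*b*c)^2).
  { assert (E : (a+b+c)^2*(a*b+b*c+c*a)^2 - 4*(a*b+b*c+c*a)^3 - 4*(a+b+c)^3*(a*b*c)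
                 + 18*(a+b+c)*(a*b+b*c+c*a)*(a*b*c) - 27*(a*b*c)^2
               = ((a-b)*(b-c)*(c-a))^2) by ring.
    rewrite E. apply pow2_ge_0. }
  set (p := a+b+c) in *. set (q := a*b+b*c+c*a) in *. set (r := a*b*c) in *.
  clearbody p q r. clear Ha Hb Hc.
  pose proof (sqrt_sqrt _ Hd3) as Hs. pose proof (sqrt_pos (p^2 - 3*q)) as Hs0.
  set (s := sqrt (p^2 - 3*q)) in *. clearbody s.
  assert (Hq : q = (p^2 - s*s)/3) by lra. subst q.
  assert (Hsp : s <= p) by nra.
  set (r1 := (9*p*((p^2 - s*s)/3) - 2*p^3 - 2*s^3)/27).
  set (r2 := (9*p*((p^2 - s*s)/3) - 2*p^3 + 2*s^3)/27).
  assert (HDr : -27*(r - r1)*(r - r2) = p^2*((p^2 - s*s)/3)^2 - 4*((p^2 - s*s)/3)^3 - 4*p^3*r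
                 + 18*p*((p^2 - s*s)/3)*r - 27*r^2) by (unfold r1, r2; field).
  assert (Hr12 : r1 <= r2) by (unfold r1, r2; assert (0 <= s^3) by (apply pow_le; lra); lra).
  assert (Hrr : r1 <= r <= r2) by nra.
  destruct (Rle_lt_dec 0 (al p ((p^2 - s*s)/3))) as [Hal|Hal].
  - destruct (Rle_lt_dec (2*s) p) as [Hps|Hps].
    + set (X := (p+s)/3). set (Y := (p-2*s)/3).
      assert (HX : 0 <= X) by (unfold X; lra). assert (HY : 0 <= Y) by (unfold Y; lra).
      pose proof (H1 X Y HX HY) as HXY. rewrite HF in HXY.
      replace (X+X+Y) with p in HXY by (unfold X, Y; field).
      replace (X*X+X*Y+Y*X) with ((p^2 - s*s)/3) in HXY by (unfold X, Y; field).
      replace (X*X*Y) with r1 in HXY by (unfold X, Y, r1; field).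
      assert (0 <= al p ((p^2 - s*s)/3) * (r - r1)) by (apply Rmult_le_pos; lra).
      nra.
    + assert (He : 0 <= p^2 - 4*((p^2 - s*s)/3)) by nra.
      pose proof (sqrt_sqrt _ He) as He2. pose proof (sqrt_pos (p^2 - 4*((p^2 - s*s)/3))) as He0.
      set (e := sqrt (p^2 - 4*((p^2 - s*s)/3))) in *. clearbody e.
      assert (Hep : e <= p) by nra.
      set (X := (p+e)/2). set (Y := (p-e)/2).
      assert (HX : 0 <= X) by (unfold X; lra). assert (HY : 0 <= Y) by (unfold Y; lra).
      pose proof (H2 X Y HX HY) as HXY. rewrite HF in HXY.
      replace (X+Y+0) with p in HXY by (unfold X, Y; field).
      replace (X*Y+Y*0+0*X) with ((p^2 - s*s)/3) in HXY by (unfold X, Y; nra).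
      replace (X*Y*0) with 0 in HXY by ring.
      assert (0 <= al p ((p^2 - s*s)/3) * r) by (apply Rmult_le_pos; lra).
      nra.
  - set (X := (p-s)/3). set (Y := (p+2*s)/3).
    assert (HX : 0 <= X) by (unfold X; lra). assert (HY : 0 <= Y) by (unfold Y; lra).
    pose proof (H1 X Y HX HY) as HXY. rewrite HF in HXY.
    replace (X+X+Y) with p in HXY by (unfold X, Y; field).
    replace (X*X+X*Y+Y*X) with ((p^2 - s*s)/3) in HXY by (unfold X, Y; field).
    replace (X*X*Y) with r2 in HXY by (unfold X, Y, r2; field).
    assert (0 <= - al p ((p^2 - s*s)/3) * (r2 - r)) by (apply Rmult_le_pos; lra).
    nra.
Qed.

Definition Fc (x0 x1 x2 x3 x4 : R) : fun3 := fun a b c =>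
  x0 * s0 a b c + x1 * s1 a b c + x2 * s2 a b c + x3 * s3 a b c + x4 * s4 a b c.

Definition alF (x0 x1 x2 x3 x4 : R) (p q : R) : R :=
  x0*(5*p^2 - 6*q) + x1*(-p^2+3*q) + x2*(-2*p^2 - 3*q) + x3*(p^2 - 3*q) + x4*q.
Definition beF (x0 x1 x2 x3 x4 : R) (p q : R) : R :=
  x0*(p^5 - 5*p^3*q + 5*p*q^2) + x1*(p^3*q - 3*p*q^2) + x2*(p*q^2).

Lemma Fc_pqr x0 x1 x2 x3 x4 a b c :
  Fc x0 x1 x2 x3 x4 a b c = beF x0 x1 x2 x3 x4 (a+b+c) (a*b+b*c+c*a)
     + alF x0 x1 x2 x3 x4 (a+b+c) (a*b+b*c+c*a) * (a*b*c).
Proof. unfold Fc, beF, alF, s0, s1, s2, s3, s4, Sn, T, U, S. ring. Qed.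

Lemma eB_Fc t u a b c : eB t u a b c =
  Fc 1 (pB1 t (omega u)) (pB2 t (omega u)) (pB3 t (omega u)) (pB4 t (omega u)) a b c.
Proof. unfold eB, Fc. cbv zeta. ring. Qed.

Lemma eB_nonneg t u : 2 <= t -> mu_B t <= u <= 1 ->
  forall a b c, 0 <= a -> 0 <= b -> 0 <= c -> 0 <= eB t u a b c.
Proof.
  intros Ht Hu a b c Ha Hb Hc.
  destruct (param t u Ht Hu) as [Hu0 [Hw [HQ HW]]].
  rewrite eB_Fc.
  apply (pqr_reduce _ (alF 1 (pB1 t (omega u)) (pB2 t (omega u)) (pB3 t (omega u)) (pB4 t (omega u)))
                      (beF 1 (pB1 t (omega u)) (pB2 t (omega u)) (pB3 t (omega u)) (pB4 t (omega u))));
    auto.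
  - intros. apply Fc_pqr.
  - intros X Y HX HY. rewrite <- eB_Fc.
    replace (eB t u X X Y) with (eB t u Y X X) by (unfold eB, s0, s1, s2, s3, s4, Sn, T, U, S; ring).
    rewrite eB_yxx by lra.
    apply Rmult_le_pos.
    + apply Rmult_le_pos; [apply pow2_ge_0|]. apply qh_nonneg; auto.
    + apply Rlt_le, Rinv_0_lt_compat. nra.
  - intros X Y HX HY. rewrite <- eB_Fc. rewrite eB_xy0.
    apply Rmult_le_pos; [lra|apply pow2_ge_0].
Qed.

Lemma eB_inP t u : 2 <= t -> mu_B t <= u <= 1 -> in_P (eB t u).
Proof.
  intros Ht Hu. split.
  - exists 1, (pB1 t (omega u)), (pB2 t (omega u)), (pB3 t (omega u)), (pB4 t (omega u)).
    intros a b c. rewrite eB_Fc. unfold Fc. ring.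
  - apply eB_nonneg; auto.
Qed.

Definition eBw (t w : R) : fun3 := Fc 1 (pB1 t w) (pB2 t w) (pB3 t w) (pB4 t w).

Lemma eBw_y11 t w y : 2 <= t -> eBw t w y 1 1 = (y - t)^2 * qh t w 1 y / (t^2*(t+2)).
Proof.
  intros Ht. unfold eBw, Fc, s0, s1, s2, s3, s4, Sn, T, U, S, pB1, pB2, pB3, pB4, qh.
  field. split; nra.
Qed.

Lemma core t w x0 x1 x2 x3 x4 : 2 <= t ->
  x1 = x0 * pB1 t w -> x2 = x0 * pB2 t w ->
  (forall y, 0 <= y -> 0 <= Fc x0 x1 x2 x3 x4 y 1 1) -> Fc x0 x1 x2 x3 x4 t 1 1 = 0 ->
  x3 = x0 * pB3 t w /\ x4 = x0 * pB4 t w.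
Proof.
  intros Ht H1 H2 Hpos Hz.
  set (y3 := x3 - x0 * pB3 t w). set (y4 := x4 - x0 * pB4 t w).
  assert (Hdec : forall y, Fc x0 x1 x2 x3 x4 y 1 1
            = x0 * eBw t w y 1 1 + y3 * (y*(y-1)^2) + y4 * (y*(2*y+1))).
  { intros y. unfold y3, y4, eBw, Fc, s0, s1, s2, s3, s4, Sn, T, U, S. rewrite H1, H2. ring. }
  assert (Hphi : y3 * (t-1)^2 + y4 * (2*t+1) = 0).
  { rewrite Hdec, eBw_y11 in Hz by lra.
    replace ((t - t)^2) with 0 in Hz by ring.
    assert (t * (y3 * (t-1)^2 + y4 * (2*t+1)) = 0).
    { rewrite <- Hz. field. split; nra. }
    apply Rmult_integral in H. destruct H; [lra|auto]. }
  set (K := fun y => x0 * ((y - t) * qh t w 1 y / (t^2*(t+2))) + y * (y3*(y+t-2) + 2*y4)).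
  assert (HK : forall y, Fc x0 x1 x2 x3 x4 y 1 1 = (y - t) * K y).
  { intros y. rewrite Hdec, eBw_y11 by lra. unfold K.
    transitivity ((y - t) * K y + y * (y3 * (t-1)^2 + y4 * (2*t+1))).
    - unfold K. field. split; nra.
    - rewrite Hphi. unfold K. ring. }
  assert (Kt : K t = 0).
  { apply (sign_zero K t t).
    - unfold K, qh. reg.
    - lra.
    - intros x Hx. rewrite <- HK. apply Hpos. lra. }
  unfold K in Kt. replace (t - t) with 0 in Kt by ring.
  assert (Hk2 : y3*(t-1) + y4 = 0).
  { assert (t * (2*(y3*(t-1) + y4)) = 0) by (rewrite <- Kt; field; split; nra).
    apply Rmult_integral in H. destruct H; lra. }
  assert (Hy3 : y3 = 0).
  { assert (y3 * ((t-1)*(t+2)) = 0) by nra.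
    apply Rmult_integral in H. destruct H; [auto|nra]. }
  assert (Hy4 : y4 = 0) by nra.
  unfold y3, y4 in *. split; lra.
Qed.

Lemma Fc_0b1 x0 x1 x2 x3 x4 b :
  Fc x0 x1 x2 x3 x4 0 b 1 = x0*(b^5+1) + x1*(b^4+b) + x2*(b^3+b^2).
Proof. unfold Fc, s0, s1, s2, s3, s4, Sn, T, U, S. ring. Qed.

Lemma Fc_001 x0 x1 x2 x3 x4 : Fc x0 x1 x2 x3 x4 0 0 1 = x0.
Proof. unfold Fc, s0, s1, s2, s3, s4, Sn, T, U, S. ring. Qed.

Lemma eB_eBw t u a b c : eB t u a b c = eBw t (omega u) a b c.
Proof. rewrite eB_Fc. reflexivity. Qed.

Lemma finish t w f x0 x1 x2 x3 x4 : 2 <= t ->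
  (forall a b c, f a b c = Fc x0 x1 x2 x3 x4 a b c) ->
  (forall a b c, 0 <= a -> 0 <= b -> 0 <= c -> 0 <= f a b c) ->
  f t 1 1 = 0 -> x1 = x0 * pB1 t w -> x2 = x0 * pB2 t w ->
  exists l, 0 <= l /\ forall a b c, f a b c = l * eBw t w a b c.
Proof.
  intros Ht HF Hpos Hz H1 H2.
  destruct (core t w x0 x1 x2 x3 x4 Ht H1 H2) as [H3 H4].
  - intros y Hy. rewrite <- HF. apply Hpos; lra.
  - rewrite <- HF. auto.
  - exists x0. split.
    + rewrite <- (Fc_001 x0 x1 x2 x3 x4), <- HF. apply Hpos; lra.
    + intros a b c. rewrite HF. unfold eBw, Fc. rewrite H1, H2, H3, H4. ring.
Qed.

Lemma rel_u t u x0 x1 x2 : 0 < u < 1 ->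
  x0*(u^5+1) + x1*(u^4+u) + x2*(u^3+u^2) = 0 ->
  5*x0*u^4 + x1*(4*u^3+1) + x2*(3*u^2+2*u) = 0 ->
  x1 = x0 * pB1 t (omega u) /\ x2 = x0 * pB2 t (omega u).
Proof.
  intros Hu E1 E2.
  set (y1 := x1 - x0 * pB1 t (omega u)). set (y2 := x2 - x0 * pB2 t (omega u)).
  assert (F1 : y1*(u^4+u) + y2*(u^3+u^2) = 0).
  { unfold y1, y2, pB1, pB2, omega. rewrite <- E1. field; lra. }
  assert (F2 : y1*(4*u^3+1) + y2*(3*u^2+2*u) = 0).
  { unfold y1, y2, pB1, pB2, omega. rewrite <- E2. field; lra. }
  assert (Hdet : (u^2*(1-u)*(u+1)^3) <> 0).
  { apply Rgt_not_eq. apply Rmult_lt_0_compat; [apply Rmult_lt_0_compat|]; [nra|lra|apply pow_lt; lra]. }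
  assert (G1 : y1 * (u^2*(1-u)*(u+1)^3) = 0).
  { transitivity ((3*u^2+2*u)*(y1*(u^4+u) + y2*(u^3+u^2)) - (u^3+u^2)*(y1*(4*u^3+1) + y2*(3*u^2+2*u))).
    - ring.
    - rewrite F1, F2. ring. }
  assert (G2 : y2 * (u^2*(1-u)*(u+1)^3) = 0).
  { transitivity ((u^4+u)*(y1*(4*u^3+1) + y2*(3*u^2+2*u)) - (4*u^3+1)*(y1*(u^4+u) + y2*(u^3+u^2))).
    - ring.
    - rewrite F1, F2. ring. }
  apply Rmult_integral in G1. apply Rmult_integral in G2.
  destruct G1 as [G1|G1]; [|contradiction]. destruct G2 as [G2|G2]; [|contradiction].
  unfold y1, y2 in *. split; lra.
Qed.

Lemma rel_1 t x0 x1 x2 : x0 + x1 + x2 = 0 -> 6*x0 + 2*x1 = 0 ->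
  x1 = x0 * pB1 t (omega 1) /\ x2 = x0 * pB2 t (omega 1).
Proof.
  intros E1 E2. assert (Ho : omega 1 = 0) by (unfold omega; unfold Rdiv; rewrite Rinv_1; ring).
  rewrite Ho. unfold pB1, pB2. split; nra.
Qed.

Lemma deriv_from_pos u x0 x1 x2 x3 x4 : 0 < u ->
  (forall y, 0 <= y -> 0 <= Fc x0 x1 x2 x3 x4 0 y 1) -> Fc x0 x1 x2 x3 x4 0 u 1 = 0 ->
  5*x0*u^4 + x1*(4*u^3+1) + x2*(3*u^2+2*u) = 0.
Proof.
  intros Hu Hpos Hz.
  set (K := fun y => x0*(y^4+y^3*u+y^2*u^2+y*u^3+u^4) + x1*(y^3+y^2*u+y*u^2+u^3+1)
                     + x2*(y^2+y*u+u^2+y+u)).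
  assert (HK : forall y, Fc x0 x1 x2 x3 x4 0 y 1 = (y - u) * K y).
  { intros y. rewrite Fc_0b1 in *. unfold K.
    transitivity ((y - u) * K y + (x0*(u^5+1) + x1*(u^4+u) + x2*(u^3+u^2))).
    - unfold K. ring.
    - rewrite Hz. unfold K. ring. }
  assert (Ku : K u = 0).
  { apply (sign_zero K u u).
    - unfold K. reg.
    - lra.
    - intros x Hx. rewrite <- HK. apply Hpos. lra. }
  rewrite <- Ku. unfold K. ring.
Qed.

Definition cval (f : fun3) : R := (f 0 2 1 / 3 - f 0 0 1) / 2.

Lemma cval_Fc x0 x1 x2 x3 x4 : x0 + x1 + x2 = 0 ->
  cval (Fc x0 x1 x2 x3 x4) = x1 + 3*x0.
Proof.
  intros E. unfold cval. rewrite !Fc_0b1. replace x2 with (-x0-x1) by lra. field.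
Qed.

Lemma cval_nonneg x0 x1 x2 x3 x4 :
  (forall y, 0 <= y -> 0 <= Fc x0 x1 x2 x3 x4 0 y 1) -> x0 + x1 + x2 = 0 ->
  0 <= x1 + 3*x0.
Proof.
  intros Hpos E.
  set (M := fun b => x0*(b-1)^2 + (x1 + 3*x0)*b).
  replace (x1 + 3*x0) with (M 1) by (unfold M; ring).
  apply (right_nonneg M 1 1).
  - unfold M. reg.
  - lra.
  - intros b Hb. pose proof (Hpos b ltac:(lra)) as P. rewrite Fc_0b1 in P.
    replace x2 with (-x0-x1) in P by lra.
    assert (E2 : x0 * (b ^ 5 + 1) + x1 * (b ^ 4 + b) + (- x0 - x1) * (b ^ 3 + b ^ 2)
                 = ((b+1)*(b-1)^2) * M b) by (unfold M; ring).
    rewrite E2 in P.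
    assert (0 < (b+1)*(b-1)^2) by (apply Rmult_lt_0_compat; [lra| apply pow_lt; lra]).
    nra.
Qed.

Lemma inH_Fc (f : fun3) : in_H f -> exists x0 x1 x2 x3 x4,
  forall a b c, f a b c = Fc x0 x1 x2 x3 x4 a b c.
Proof.
  intros [x0 [x1 [x2 [x3 [x4 HF]]]]]. exists x0, x1, x2, x3, x4.
  intros a b c. rewrite HF. reflexivity.
Qed.

Lemma eB_t11 t u : 2 <= t -> eB t u t 1 1 = 0.
Proof. intros Ht. rewrite eB_eBw, eBw_y11 by lra. replace (t - t) with 0 by ring. field. split; nra. Qed.

Lemma eB_0u1 t u : 0 < u -> eB t u 0 u 1 = 0.
Proof.
  intros Hu. rewrite eB_eBw. unfold eBw. rewrite Fc_0b1. unfold pB1, pB2, omega. field. lra.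
Qed.

Lemma part_u t u f : 2 <= t -> 0 < u < 1 -> in_P f -> f t 1 1 = 0 -> f 0 u 1 = 0 ->
  (forall x0 x1 x2 x3 x4, (forall a b c, f a b c = Fc x0 x1 x2 x3 x4 a b c) ->
     5*x0*u^4 + x1*(4*u^3+1) + x2*(3*u^2+2*u) = 0) ->
  exists l, 0 <= l /\ forall a b c, f a b c = l * eB t u a b c.
Proof.
  intros Ht Hu [HH Hpos] Hz1 Hz2 Hd.
  destruct (inH_Fc f HH) as [x0 [x1 [x2 [x3 [x4 HF]]]]].
  pose proof (Hd _ _ _ _ _ HF) as D1.
  rewrite HF, Fc_0b1 in Hz2.
  destruct (rel_u t u x0 x1 x2 Hu Hz2 D1) as [H1 H2].
  destruct (finish t (omega u) f x0 x1 x2 x3 x4 Ht HF Hpos Hz1 H1 H2) as [l [Hl Hf]].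
  exists l. split; auto. intros a b c. rewrite Hf, eB_eBw. reflexivity.
Qed.

Lemma part_1 t f : 2 <= t -> in_P f -> f t 1 1 = 0 -> f 0 1 1 = 0 ->
  (forall x0 x1 x2 x3 x4, (forall a b c, f a b c = Fc x0 x1 x2 x3 x4 a b c) ->
     6*x0 + 2*x1 = 0) ->
  exists l, 0 <= l /\ forall a b c, f a b c = l * eB t 1 a b c.
Proof.
  intros Ht [HH Hpos] Hz1 Hz2 Hd.
  destruct (inH_Fc f HH) as [x0 [x1 [x2 [x3 [x4 HF]]]]].
  pose proof (Hd _ _ _ _ _ HF) as D1.
  rewrite HF, Fc_0b1 in Hz2.
  destruct (rel_1 t x0 x1 x2 ltac:(lra) D1) as [H1 H2].
  destruct (finish t (omega 1) f x0 x1 x2 x3 x4 Ht HF Hpos Hz1 H1 H2) as [l [Hl Hf]].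
  exists l. split; auto. intros a b c. rewrite Hf, eB_eBw. reflexivity.
Qed.

Lemma ext_part t u g h : 2 <= t -> mu_B t <= u <= 1 -> in_P g -> in_P h ->
  (forall a b c, eB t u a b c = g a b c + h a b c) ->
  exists l, 0 <= l /\ forall a b c, g a b c = l * eB t u a b c.
Proof.
  intros Ht Hu Pg Ph Hs.
  destruct (param t u Ht Hu) as [Hu0 _].
  pose proof Pg as [HHg Hg]. pose proof Ph as [HHh Hh].
  assert (Gt : g t 1 1 = 0).
  { pose proof (Hs t 1 1). rewrite eB_t11 in H by lra.
    pose proof (Hg t 1 1 ltac:(lra) ltac:(lra) ltac:(lra)).
    pose proof (Hh t 1 1 ltac:(lra) ltac:(lra) ltac:(lra)). lra. }
  assert (Ht' : h t 1 1 = 0).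
  { pose proof (Hs t 1 1). rewrite eB_t11 in H by lra. lra. }
  assert (Gu : g 0 u 1 = 0).
  { pose proof (Hs 0 u 1). rewrite eB_0u1 in H by lra.
    pose proof (Hg 0 u 1 ltac:(lra) ltac:(lra) ltac:(lra)).
    pose proof (Hh 0 u 1 ltac:(lra) ltac:(lra) ltac:(lra)). lra. }
  destruct (Rle_lt_dec 1 u) as [Hu1|Hu1].
  - assert (u = 1) by lra. subst u.
    assert (Hu' : h 0 1 1 = 0).
    { pose proof (Hs 0 1 1). rewrite eB_0u1 in H by lra. lra. }
    apply part_1; auto.
    intros x0 x1 x2 x3 x4 HF.
    destruct (inH_Fc h HHh) as [z0 [z1 [z2 [z3 [z4 HFh]]]]].
    assert (E1 : x0 + x1 + x2 = 0) by (rewrite HF, Fc_0b1 in Gu; lra).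
    assert (E2 : z0 + z1 + z2 = 0) by (rewrite HFh, Fc_0b1 in Hu'; lra).
    assert (C1 : 0 <= x1 + 3*x0).
    { apply (cval_nonneg x0 x1 x2 x3 x4); auto. intros y Hy. rewrite <- HF. apply Hg; lra. }
    assert (C2 : 0 <= z1 + 3*z0).
    { apply (cval_nonneg z0 z1 z2 z3 z4); auto. intros y Hy. rewrite <- HFh. apply Hh; lra. }
    assert (Cs : cval g + cval h = cval (eB t 1)).
    { unfold cval. rewrite !Hs. field. }
    assert (Ce : cval (eB t 1) = 0).
    { unfold cval. rewrite !eB_eBw. unfold eBw. rewrite !Fc_0b1.
      assert (Ho : omega 1 = 0) by (unfold omega; unfold Rdiv; rewrite Rinv_1; ring).
      rewrite Ho. unfold pB1, pB2. field. }
    assert (Cg : cval g = x1 + 3*x0).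
    { rewrite <- (cval_Fc x0 x1 x2 x3 x4 E1). unfold cval. rewrite !HF. reflexivity. }
    assert (Ch : cval h = z1 + 3*z0).
    { rewrite <- (cval_Fc z0 z1 z2 z3 z4 E2). unfold cval. rewrite !HFh. reflexivity. }
    lra.
  - refine (part_u t u g Ht ltac:(lra) Pg Gt Gu _).
    intros x0 x1 x2 x3 x4 HF.
    apply (deriv_from_pos u x0 x1 x2 x3 x4); auto.
    + intros y Hy. rewrite <- HF. apply Hg; lra.
    + rewrite <- HF. auto.
Qed.

Theorem theorem4p10 :
  (forall t u : R, 2 <= t -> mu_B t <= u <= 1 -> extremal in_P (eB t u)) /\
  (forall (t u : R) (f : fun3), 2 <= t -> mu_B t <= u < 1 -> in_P f ->
     f t 1 1 = 0 -> f 0 u 1 = 0 -> f_b f 0 u 1 = 0 ->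
     exists l, 0 <= l /\ forall a b c, f a b c = l * eB t u a b c) /\
  (forall (t : R) (f : fun3), 2 <= t -> in_P f ->
     f t 1 1 = 0 -> f 0 1 1 = 0 -> f_bb f 0 1 1 = 0 ->
     exists l, 0 <= l /\ forall a b c, f a b c = l * eB t 1 a b c) /\
  (forall a b c : R, eB 2 1 a b c = eC 2 a b c).
Proof.
  split; [|split; [|split]].
  - intros t u Ht Hu. split; [apply eB_inP; auto|]. split.
    + exists 0, 0, 1. rewrite eB_Fc, Fc_001. lra.
    + intros g h Pg Ph Hs. split.
      * apply (ext_part t u g h); auto.
      * apply (ext_part t u h g); auto. intros a b c. rewrite Hs. ring.
  - intros t u f Ht [Hu1 Hu2] Pf Hz1 Hz2 Hd.
    destruct (param t u Ht (conj Hu1 (Rlt_le _ _ Hu2))) as [Hu0 _].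
    apply part_u; auto.
    intros x0 x1 x2 x3 x4 HF.
    unfold f_b in Hd.
    rewrite (Derive_ext _ (fun y => x0*(y^5+1) + x1*(y^4+y) + x2*(y^3+y^2))) in Hd
      by (intros y; rewrite HF, Fc_0b1; reflexivity).
    rewrite (is_derive_unique _ _ (5*x0*u^4 + x1*(4*u^3+1) + x2*(3*u^2+2*u))) in Hd; auto.
    auto_derive; auto. ring.
  - intros t f Ht Pf Hz1 Hz2 Hd.
    apply part_1; auto.
    intros x0 x1 x2 x3 x4 HF.
    assert (E1 : x0 + x1 + x2 = 0) by (rewrite HF, Fc_0b1 in Hz2; lra).
    unfold f_bb in Hd.
    rewrite (Derive_n_ext _ (fun y => x0*(y^5+1) + x1*(y^4+y) + x2*(y^3+y^2))) in Hd
      by (intros y; rewrite HF, Fc_0b1; reflexivity).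
    simpl in Hd.
    rewrite (Derive_ext _ (fun y => 5*x0*y^4 + x1*(4*y^3+1) + x2*(3*y^2+2*y))) in Hd.
    + rewrite (is_derive_unique _ _ (20*x0 + 12*x1 + 8*x2)) in Hd.
      * lra.
      * auto_derive; auto. ring.
    + intros y. apply is_derive_unique. auto_derive; auto. ring.
  - intros a b c. rewrite eB_eBw.
    assert (Ho : omega 1 = 0) by (unfold omega; unfold Rdiv; rewrite Rinv_1; ring).
    rewrite Ho. unfold eBw, Fc, eC, pB1, pB2, pB3, pB4. field.
Qed.
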